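(* Let $X$ be a one-sided subshift with $\sigma(X)=X$ which is aperiodic and satisfies $|Sp_l(X,\sigma)|<\infty$. Then $(\widetilde{X},\sigma_{\widetilde{X}})$ is a zero-dimensional compact metrizable system in which $\sigma_{\widetilde{X}}$ is an aperiodic surjective local homeomorphism, and moreover: (i) $|Sp_l(\widetilde{X},\sigma_{\widetilde{X}})|=|Sp_l(X,\sigma)|<\infty$; (ii) every point of $Sp_l(\widetilde{X},\sigma_{\widetilde{X}})$ is an isolated point of $\widetilde{X}$.
   Context: $X\subseteq\mathcal{A}^{\mathbb{N}}$ is a closed shift-invariant set over a finite alphabet $\mathcal{A}$, $\sigma$ the left shift. Aperiodic: no point $x$ with $\sigma^n(x)=x$ for some $n\ge1$. For a map $T$ on $Y$, $Sp_l(Y,T)=\{y: |T^{-1}(\{y\})|\ge2\}$. The cover: for $x\in X$, $l\ge0$, $P_l(x)=\{\mu\in\mathcal{L}(X): |\mu|=l,\ \mu x\in X\}$. Let $\mathcal{I}=\{(k,l)\in\mathbb{N}^2: k\le l\}$ with $(k,l)\preceq(k',l')$ iff $k\le k'$ and $l-k\le l'-k'$. For $(k,l)\in\mathcal{I}$, $x\overset{k,l}{\sim}y$ iff $x_{[0,k)}=y_{[0,k)}$ and $P_l(\sigma^k(x))=P_l(\sigma^k(y))$; ${}_kX_l=X/\overset{k,l}{\sim}$ (finite, discrete), classes ${}_k[x]_l$. $\widetilde{X}$ is the projective limit of $({}_kX_l)$ under the maps ${}_{k'}[x]_{l'}\mapsto{}_k[x]_l$ for $(k,l)\preceq(k',l')$.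 The shift is $\sigma_{\widetilde{X}}(\tilde{x})_{(k,l)}={}_k[\sigma(z)]_l$ for any representative $z$ of $\tilde{x}_{(k+1,l+1)}$. A map is a local homeomorphism if each point has an open neighbourhood on which it restricts to a homeomorphism onto an open set. *)

(* Defs.v *)
From HB Require Import structures.
From mathcomp Require Import all_boot all_order all_algebra.
From mathcomp Require Import all_classical all_reals.
From mathcomp Require Import topology_structure uniform_structure
  pseudometric_structure compact connected separation_axioms
  discrete_topology product_topology subspace_topology subtype_topology
  function_spaces.
From Stdlib Require Import Rdefinitions.

Set Implicit Arguments.
Unset Strict Implicit.
Unset Printing Implicit Defensive.

Local Open Scope classical_set_scope.

Definition fullshift (A : finType) : topologicalType :=
  {ptws nat -> discrete_topology A}.

Definition shift {A : finType} (x : nat -> A) : nat -> A := fun n => x n.+1.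

Definition subshift {A : finType} (X : set (nat -> A)) : Prop :=
  closed (X : set (fullshift A)) /\ shift @` X `<=` X.

Definition aperiodic_on {T : Type} (Y : set T) (f : T -> T) : Prop :=
  forall x, Y x -> forall n, (1 <= n)%N -> iter n f x <> x.

Definition Spl {T : Type} (Y : set T) (f : T -> T) : set T :=
  [set y | Y y /\ exists y1 y2, [/\ Y y1, Y y2, y1 <> y2, f y1 = y & f y2 = y]].

Definition lang {A : finType} (X : set (nat -> A)) : set (seq A) :=
  [set mu | exists x, X x /\ exists i, mu = [seq x (i + j)%N | j <- iota 0 (size mu)]].

Definition catw {A : finType} (mu : seq A) (x : nat -> A) : nat -> A :=
  fun n => if (n < size mu)%N then nth (x 0%N) mu n else x (n - size mu)%N.

Definition Pl {A : finType} (X : set (nat -> A)) (l : nat) (x : nat -> A)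
  : set (seq A) :=
  [set mu | lang X mu /\ size mu = l /\ X (catw mu x)].

Definition Idx := {p : nat * nat | (p.1 <= p.2)%N}.
Definition Ik (i : Idx) : nat := (sval i).1.
Definition Il (i : Idx) : nat := (sval i).2.
Definition Ile (i j : Idx) : Prop :=
  (Ik i <= Ik j)%N /\ (Il i - Ik i <= Il j - Ik j)%N.

Definition Isucc (i : Idx) : Idx :=
  exist (fun p : nat * nat => (p.1 <= p.2)%N) ((Ik i).+1, (Il i).+1) (proj2_sig i).

Definition kl_equiv {A : finType} (X : set (nat -> A)) (i : Idx)
  (x y : nat -> A) : Prop :=
  (forall n, (n < Ik i)%N -> x n = y n) /\
  Pl X (Il i) (iter (Ik i) shift x) = Pl X (Il i) (iter (Ik i) shift y).

Definition cls {A : finType} (X : set (nat -> A)) (i : Idx) (x : nat -> A)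
  : set (nat -> A) :=
  [set y | X y /\ kl_equiv X i x y].

(* Ambient space of families of classes: product over I of discrete spaces
   (each  _kX_l  is a subset of such a discrete space, hence discrete). *)
Definition Famspace (A : finType) : topologicalType :=
  prod_topology (fun _ : Idx => discrete_topology (set (nat -> A))).

Definition Xtilde {A : finType} (X : set (nat -> A)) : set (Famspace A) :=
  [set f | (forall i, exists x, X x /\ f i = cls X i x) /\
           (forall i j, Ile i j -> forall x, X x ->
              f j = cls X j x -> f i = cls X i x)].

Definition rep {A : finType} (c : set (nat -> A)) : option (nat -> A) :=
  match pselect (exists z, c z) with
  | left h => Some (proj1_sig (cid h))
  | right _ => None
  end.

Definition shift_tilde {A : finType} (X : set (nat -> A)) (f : Famspace A)
  : Famspace A :=
  fun i => match rep (f (Isucc i)) with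
           | Some z => cls X i (shift z)
           | None => set0
           end.

(* sigma_{X~} as a self-map of the (topological) subtype X~ ; the fallback
   branch is never used, as shift_tilde preserves X~ (asserted in the theorem). *)
Definition sigma_tilde {A : finType} (X : set (nat -> A)) (t : Xtilde X)
  : Xtilde X :=
  match pselect (shift_tilde X (val t) \in Xtilde X) with
  | left h => exist _ (shift_tilde X (val t)) h
  | right _ => t
  end.

Definition metrizable (T : topologicalType) : Prop :=
  exists d : T -> T -> R,
    [/\ (forall x y, Rle 0 (d x y)),
        (forall x y, d x y = 0%R <-> x = y),
        (forall x y, d x y = d y x),
        (forall x y z, Rle (d x z) (Rplus (d x y) (d y z))) &
        (forall U : set T, open U <->
           forall x, U x -> exists e, Rlt 0 e /\ [set y | Rlt (d x y) e] `<=` U)].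

Definition local_homeo (T : topologicalType) (f : T -> T) : Prop :=
  forall x, exists U : set T,
    [/\ open U, U x, open (f @` U), set_inj U f &
        {within U, continuous f} /\
        (forall V : set T, open V -> V `<=` U -> open (f @` V))].

Definition isolated_point (T : topologicalType) (x : T) : Prop := open [set x].

Arguments sigma_tilde {A} X t.
Arguments shift_tilde {A} X f i.
Arguments Xtilde {A} X _.
Arguments cls {A} X i x _.
Arguments Pl {A} X l x _.

(* Main.v *)
From Stdlib Require Import Reals Lra.
Require Import Defs.
From HB Require Import structures.
From mathcomp Require Import all_boot all_order all_algebra.
From mathcomp Require Import all_classical all_reals.
From mathcomp Require Import topology_structure uniform_structure
  pseudometric_structure compact connected separation_axioms
  discrete_topology product_topology subspace_topology subtype_topology
  function_spaces supremum_topology initial_topology.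
From mathcomp Require Import zify.

Set Implicit Arguments.
Unset Strict Implicit.
Unset Printing Implicit Defensive.
Local Open Scope classical_set_scope.


Section Seqs.
Variable A : finType.
Implicit Types (x y u v w z : nat -> A) (mu nu : seq A).

Lemma iterSh k x n : iter k shift x n = x (k + n)%N.
Proof. by elim: k n => [|k IH] n //=; rewrite /shift IH addSnnS. Qed.


Lemma catw_nil x : catw [::] x = x.
Proof. by apply: funext => n; rewrite /catw /= subn0. Qed.

Lemma iter_catw mu x : iter (size mu) shift (catw mu x) = x.
Proof.
apply: funext => n; rewrite iterSh /catw.
by rewrite ltnNge leq_addr /= addKn.
Qed.

Lemma shift_catw1 a x : shift (catw [:: a] x) = x.
Proof. exact: (iter_catw [:: a] x). Qed.

Lemma catw_cat mu nu x : catw mu (catw nu x) = catw (mu ++ nu) x.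
Proof.
apply: funext => n; rewrite /catw size_cat nth_cat.
case: (ltnP n (size mu)) => H1.
  rewrite ltn_addr //; exact: set_nth_default.
case: (ltnP (n - size mu) (size nu)) => H2.
  rewrite (_ : n < size mu + size nu); last lia.
  exact: set_nth_default.
rewrite (_ : n < size mu + size nu = false); last lia.
by rewrite subnDA.
Qed.

Lemma catw_shift x : catw [:: x 0%N] (shift x) = x.
Proof.
apply: funext => n; rewrite /catw /=; case: n => //= n.
by rewrite /shift subn1.
Qed.

Lemma catw_eq1 a x : x 0%N = a -> catw [:: a] (shift x) = x.
Proof. by move=> <-; exact: catw_shift. Qed.

Lemma catw_lang (X : set (nat -> A)) mu x : X (catw mu x) -> lang X mu.
Proof.
move=> H; exists (catw mu x); split => //; exists 0%N.
rewrite -{1}(mkseq_nth (x 0%N) mu) /mkseq; apply/eq_in_map => j.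
by rewrite mem_iota add0n /catw => /andP [_ ->].
Qed.

Lemma catw_iter_seg k k' x :
  (k <= k')%N ->
  catw [seq x (k + j)%N | j <- iota 0 (k' - k)] (iter k' shift x) = iter k shift x.
Proof.
move=> Hk; apply: funext => n; rewrite /catw size_map size_iota !iterSh.
case: ltnP => H.
  by rewrite (nth_map 0%N) ?size_iota // nth_iota.
congr x; lia.
Qed.

End Seqs.

Section Subshift.
Variable A : finType.
Variable X : set (nat -> A).
Hypothesis HX : subshift X.
Hypothesis Hsurj : shift @` X = X.
Implicit Types (x y u v w z : nat -> A) (mu nu : seq A).

Lemma X_shift x : X x -> X (shift x).
Proof. by move=> Hx; case: HX => _; apply; exists x. Qed.

Lemma X_iter n x : X x -> X (iter n shift x).
Proof. by elim: n => //= n IH Hx; apply: X_shift; apply: IH. Qed.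

Lemma X_pre x : X x -> exists a, X (catw [:: a] x).
Proof.
move=> Hx; have : (shift @` X) x by rewrite Hsurj.
by case=> z Hz <-; exists (z 0%N); rewrite catw_shift.
Qed.

Lemma pre_iter d u : X u -> exists nu, size nu = d /\ X (catw nu u).
Proof.
move=> Hu; elim: d => [|d [nu [Hs Hnu]]].
  by exists [::]; rewrite catw_nil.
have [a Ha] := X_pre Hnu; exists (a :: nu); split; first by rewrite /= Hs.
by move: Ha; rewrite catw_cat.
Qed.

Lemma Pl_shift_sub k k' l l' x y :
  (k <= k')%N -> (forall n, (k <= n < k')%N -> x n = y n) ->
  (l + (k' - k) <= l')%N ->
  Pl X l' (iter k' shift x) = Pl X l' (iter k' shift y) ->
  Pl X l (iter k shift x) `<=` Pl X l (iter k shift y).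
Proof.
move=> Hk Hxy Hl HP mu [Hlang [Hsz Hmu]].
set w := [seq x (k + j)%N | j <- iota 0 (k' - k)].
have Hw : w = [seq y (k + j)%N | j <- iota 0 (k' - k)].
  apply/eq_in_map => j; rewrite mem_iota add0n => /andP [_ Hj].
  apply: Hxy; lia.
have [nu [Hnu HXnu]] := pre_iter (l' - l - (k' - k)) Hmu.
have Hrho : Pl X l' (iter k' shift x) (nu ++ mu ++ w).
  have HX1 : X (catw (nu ++ mu ++ w) (iter k' shift x)).
    by rewrite -!catw_cat catw_iter_seg.
  split; first exact: catw_lang HX1.
  split => //; rewrite !size_cat Hnu Hsz size_map size_iota; lia.
move: Hrho; rewrite HP => -[_ [_ HY]].
move: HY; rewrite Hw -!catw_cat catw_iter_seg // => HY.
split => //; split => //.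
by have := X_iter (size nu) HY; rewrite iter_catw.
Qed.

Lemma Pl_shift k k' l l' x y :
  (k <= k')%N -> (forall n, (k <= n < k')%N -> x n = y n) ->
  (l + (k' - k) <= l')%N ->
  Pl X l' (iter k' shift x) = Pl X l' (iter k' shift y) ->
  Pl X l (iter k shift x) = Pl X l (iter k shift y).
Proof.
move=> Hk Hxy Hl HP; apply/seteqP; split; first exact: Pl_shift_sub HP.
apply: Pl_shift_sub (esym HP) => //.
by move=> n Hn; rewrite Hxy.
Qed.

End Subshift.

Definition mkI k l (h : (k <= l)%N) : Idx :=
  exist (fun p : nat * nat => (p.1 <= p.2)%N) (k, l) h.
Definition Jx (i : Idx) : Idx := @mkI (Ik i) (Il i).+1 (leqW (proj2_sig i)).
Definition I01 : Idx := @mkI 0 1 isT.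
Definition I11 : Idx := @mkI 1 1 isT.
Definition IKK (K : nat) : Idx := @mkI K K.+1 (leqnSn K).

Lemma Ik_le (i : Idx) : (Ik i <= Il i)%N.
Proof. exact: proj2_sig i. Qed.

Lemma Ile_refl i : Ile i i.
Proof. by split. Qed.

Lemma Ile_trans i j m : Ile i j -> Ile j m -> Ile i m.
Proof. by rewrite /Ile => -[? ?] [? ?]; split; lia. Qed.

Lemma Ile_ub i j : exists m, Ile i m /\ Ile j m.
Proof.
have h : (maxn (Ik i) (Ik j) <= maxn (Ik i) (Ik j) + maxn (Il i - Ik i) (Il j - Ik j))%N
  by apply: leq_addr.
exists (mkI h); rewrite /Ile /Ik /Il /=; split; split; rewrite -/(Ik _) -/(Il _); lia.
Qed.

Lemma Ile_ub_seq (L : seq Idx) : exists m, forall i, i \in L -> Ile i m.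
Proof.
elim: L => [|i L [m Hm]]; first by exists I01.
have [m' [H1 H2]] := Ile_ub i m; exists m' => j; rewrite inE => /orP [/eqP ->|/Hm H] //.
exact: Ile_trans H H2.
Qed.

Ltac idxs := rewrite /Ile /Isucc /Jx /mkI /I01 /I11 /IKK /= /Ik /Il /=.

Lemma Ile_succ i : Ile i (Isucc i).
Proof. by idxs; split; lia. Qed.

Lemma Ile_succ_mono i j : Ile i j -> Ile (Isucc i) (Isucc j).
Proof. by idxs => -[? ?]; split; lia. Qed.

Lemma Ile_Jx_mono i j : Ile i j -> Ile (Jx i) (Jx j).
Proof. have := Ik_le i; have := Ik_le j; idxs => ? ? [? ?]; split; lia. Qed.

Lemma Ile_Jx i : Ile i (Jx i).
Proof. have := Ik_le i; idxs => ?; split; lia. Qed.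

Lemma Ile_01_Jx i : Ile I01 (Jx i).
Proof. have := Ik_le i; idxs => ?; split; lia. Qed.

Section Classes.
Variable A : finType.
Variable X : set (nat -> A).
Hypothesis HX : subshift X.
Hypothesis Hsurj : shift @` X = X.
Implicit Types (x y u v w z : nat -> A) (mu nu : seq A) (i j : Idx).
Local Notation ke := (kl_equiv X).

Lemma ke_refl i x : ke i x x.
Proof. by split. Qed.

Lemma ke_sym i x y : ke i x y -> ke i y x.
Proof. by move=> [H1 H2]; split => // n Hn; rewrite H1. Qed.

Lemma ke_trans i x y z : ke i x y -> ke i y z -> ke i x z.
Proof. by move=> [H1 H2] [H3 H4]; split; [move=> n Hn; rewrite H1 // H3|rewrite H2]. Qed.

Lemma cls_mem i x : X x -> cls X i x x.
Proof. by move=> Hx; split => //; exact: ke_refl. Qed.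

Lemma cls_eq i x y : ke i x y -> cls X i x = cls X i y.
Proof.
move=> H; apply/seteqP; split => z [Hz Hk]; split => //.
  exact: ke_trans (ke_sym H) Hk.
exact: ke_trans H Hk.
Qed.

Lemma cls_ke i x y : cls X i x y -> ke i x y.
Proof. by case. Qed.

Lemma cls_eq_ke i x y : X y -> cls X i x = cls X i y -> ke i x y.
Proof. by move=> Hy E; apply: cls_ke; rewrite E; exact: cls_mem. Qed.

Lemma ke_down i j x y : Ile i j -> ke j x y -> ke i x y.
Proof.
move=> [H1 H2] [H3 H4]; split.
  by move=> n Hn; apply: H3; lia.
apply: (Pl_shift HX Hsurj H1 _ _ H4).
  by move=> n /andP [_ Hn]; apply: H3.
have := Ik_le i; have := Ik_le j; lia.
Qed.

Lemma ke_shift i z z' : ke (Isucc i) z z' -> ke i (shift z) (shift z').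
Proof.
move=> [H1 H2]; split.
  by move=> n Hn; rewrite /shift; apply: H1; rewrite /Ik /Isucc /=; rewrite -/(Ik i); lia.
rewrite -!iterSr.
apply: (Pl_shift HX Hsurj (k' := (Ik i).+1) (l' := (Il i).+1)) => //.
- by move=> n; lia.
- lia.
Qed.

Lemma ke_cons i a w w' : ke (Jx i) w w' -> ke i (catw [:: a] w) (catw [:: a] w').
Proof.
move=> [H1 H2]; have HI : Ik (Jx i) = Ik i by [].
split.
  move=> n Hn; rewrite /catw /=; case: n Hn => //= n Hn.
  by rewrite subn1 /=; apply: H1; rewrite HI; lia.
apply: (Pl_shift HX Hsurj (k' := (Ik i).+1) (l' := (Il i).+1)) => //.
- rewrite /catw; case=> [|n] //= /andP [Hn1 Hn2].
  by rewrite subn1 /=; apply: H1; rewrite HI; lia.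
- lia.
- by rewrite !iterSr !shift_catw1.
Qed.

End Classes.

Section XT.
Variable A : finType.
Variable X : set (nat -> A).
Hypothesis HX : subshift X.
Hypothesis Hsurj : shift @` X = X.
Implicit Types (x y u v w z : nat -> A) (mu nu : seq A) (i j : Idx) (f g : Famspace A).
Local Notation ke := (kl_equiv X).
Local Notation Xt := (Xtilde X).

Lemma Xt_ne f i : Xt f -> exists z, f i z.
Proof. by move=> [H1 _]; have [x [Hx ->]] := H1 i; exists x; exact: cls_mem. Qed.

Lemma Xt_mem f i z : Xt f -> f i z -> X z /\ f i = cls X i z.
Proof.
move=> [H1 _]; have [x [Hx ->]] := H1 i => Hz; split; first by case: Hz.
exact: cls_eq (cls_ke Hz).
Qed.

Lemma Xt_down f i j z : Xt f -> Ile i j -> f j z -> f i z.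
Proof.
move=> Hf Hij Hz; have [Xz E] := Xt_mem Hf Hz.
by case: Hf => _ /(_ _ _ Hij _ Xz E) ->; exact: cls_mem.
Qed.

Lemma Xt_mem_ke f i z z' : Xt f -> f i z -> f i z' -> ke i z z'.
Proof. by move=> Hf Hz Hz'; have [_ E] := Xt_mem Hf Hz; move: Hz'; rewrite E => /cls_ke. Qed.

Lemma Xt_eq_down f g i j : Xt f -> Xt g -> Ile i j -> f j = g j -> f i = g i.
Proof.
move=> Hf Hg Hij E; have [z Hz] := Xt_ne j Hf.
have Hz' : g j z by rewrite -E.
have [_ ->] := Xt_mem Hf (Xt_down Hf Hij Hz).
by have [_ ->] := Xt_mem Hg (Xt_down Hg Hij Hz').
Qed.

Lemma iota_Xt x : X x -> Xt (fun i => cls X i x).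
Proof.
move=> Hx; split; first by move=> i; exists x.
move=> i j Hij x' Hx' /= E; apply: cls_eq; apply: (ke_down HX Hsurj Hij).
exact: cls_eq_ke Hx' E.
Qed.

Lemma rep_some (c : set (nat -> A)) z : c z -> exists z', rep c = Some z' /\ c z'.
Proof.
move=> Hz; rewrite /rep; case: pselect => [h|h]; last by exfalso; apply: h; exists z.
by exists (proj1_sig (cid h)); split => //; exact: (proj2_sig (cid h)).
Qed.

Lemma st_val f i z : Xt f -> f (Isucc i) z -> shift_tilde X f i = cls X i (shift z).
Proof.
move=> Hf Hz; rewrite /shift_tilde; have [z' [-> Hz']] := rep_some Hz.
by apply: cls_eq; apply: (ke_shift HX Hsurj); exact: Xt_mem_ke Hf Hz' Hz.
Qed.

Lemma st_Xt f : Xt f -> Xt (shift_tilde X f).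
Proof.
move=> Hf; split.
  move=> i; have [z Hz] := Xt_ne (Isucc i) Hf; rewrite (st_val Hf Hz).
  by exists (shift z); split => //; apply: (X_shift HX); case: (Xt_mem Hf Hz).
move=> i j Hij x Hx.
have [zj Hzj] := Xt_ne (Isucc j) Hf; rewrite (st_val Hf Hzj) => E.
have [zi Hzi] := Xt_ne (Isucc i) Hf; rewrite (st_val Hf Hzi).
have Hzj' : f (Isucc i) zj := Xt_down Hf (Ile_succ_mono Hij) Hzj.
rewrite (cls_eq (ke_shift HX Hsurj (Xt_mem_ke Hf Hzi Hzj'))).
by apply: cls_eq; apply: (ke_down HX Hsurj Hij); exact: cls_eq_ke Hx E.
Qed.

Lemma sigma_val (t : Xt) : val (sigma_tilde X t) = shift_tilde X (val t).
Proof.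
rewrite /sigma_tilde; case: pselect => // h; exfalso; apply: h.
by apply: mem_set; apply: st_Xt; exact: set_valP t.
Qed.

End XT.

Section Topo.
Variables (I : eqType) (T : choiceType).
Definition cyl (f : I -> T) (L : seq I) : set (I -> T) :=
  [set g | forall i, i \in L -> g i = f i].

Lemma ptws_nbhs (f : {ptws I -> discrete_topology T}) (B : set {ptws I -> discrete_topology T}) :
  nbhs f B -> exists L : seq I, cyl f L `<=` B.
Proof.
pose G := filter_from [set: seq I] (fun L => cyl f L).
have FG : Filter G.
  apply: filter_from_filter; first by exists [::].
  move=> L1 L2 _ _; exists (L1 ++ L2) => // g Hg; split => i Hi; apply: Hg;
  by rewrite mem_cat Hi ?orbT.
suff : G --> f by move=> /(_ B) H /H [L _ HL]; exists L.
apply/(@cvg_sup _ _ _ G f FG) => i.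
move=> U /=.
move=> H.
have {H} : nbhs (f : initial_topology (fun g : (I -> discrete_topology T) => g i)) U := H.
rewrite nbhsE => -[V [[W oW <-] Vf] VU].
exists [:: i] => // g Hg; apply: VU => /=.
have -> : g i = f i by apply: Hg; rewrite inE.
move: oW; rewrite openE => /(_ _ Vf). rewrite /interior nbhs_principalE.
by move/principal_filterP.
Qed.

Lemma ptws_cyl_open (i : I) (c : T) :
  open ([set g | g i = c] : set {ptws I -> discrete_topology T}).
Proof.
have H : continuous (fun g : {ptws I -> discrete_topology T} => g i) := @proj_continuous I (fun _ => discrete_topology T) i.
have := (proj1 (continuousP _) H [set c]).
apply.
by rewrite openE => x /= ->; rewrite /interior nbhs_principalE; apply/principal_filterP.
Qed.

Lemma sub_nbhs (S : set {ptws I -> discrete_topology T}) (t : S) (U : set S) :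
  nbhs t U -> exists L : seq I, [set s : S | cyl (val t) L (val s)] `<=` U.
Proof.
rewrite nbhsE => -[V [[W oW <-] Vf] VU].
have : nbhs (val t : {ptws I -> discrete_topology T}) W.
  by rewrite nbhsE; exists W.
move/ptws_nbhs => [L HL]; exists L => s Hs; apply: VU; exact: HL.
Qed.

Lemma sub_cyl_open (S : set {ptws I -> discrete_topology T}) (i : I) (c : T) :
  open [set s : S | val s i = c].
Proof.
exists [set g | g i = c]; last by [].
exact: ptws_cyl_open.
Qed.
End Topo.

Lemma closed_lim (A : finType) (X : set (nat -> A)) (y : nat -> A) :
  subshift X ->
  (forall m, exists x, X x /\ forall n, (n < m)%N -> x n = y n) -> X y.
Proof.
move=> [HXc _] H; apply: HXc => B /= HB.
have [L HL] := @ptws_nbhs nat A y B HB.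
have [x [Hx Hxy]] := H (\max_(i <- L) i.+1)%N.
exists x; split => //; apply: HL => i Hi; apply: Hxy.
by have := @leq_bigmax_seq nat L xpredT (fun i => i.+1) i Hi isT.
Qed.

Section YS.
Variable A : finType.
Variable X : set (nat -> A).
Hypothesis HX : subshift X.
Hypothesis Hsurj : shift @` X = X.
Implicit Types (x y u v w z : nat -> A) (mu nu : seq A) (i j : Idx) (f g : Famspace A).
Local Notation ke := (kl_equiv X).
Local Notation Xt := (Xtilde X).

Definition Yprop f y := forall i z, f i z -> forall m, (m < Ik i)%N -> z m = y m.

Definition Imm (m : nat) : Idx := @mkI m m (leqnn m).

Lemma Yex f : Xt f -> exists y, Yprop f y /\ X y.
Proof.
move=> Hf.
have [y Hy] : exists y, forall m, exists z, f (Imm m.+1) z /\ z m = y m.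
  have := @choice nat A (fun m a => exists z, f (Imm m.+1) z /\ z m = a).
  case=> [m|y Hy]; last by exists y.
  by have [z Hz] := Xt_ne (Imm m.+1) Hf; exists (z m); exists z.
have HY : Yprop f y.
  move=> i z Hz m Hm; have [zm [Hzm <-]] := Hy m.
  have [j [Hij Hmj]] := Ile_ub i (Imm m.+1).
  have [w Hw] := Xt_ne j Hf.
  have [H1 _] := Xt_mem_ke Hf (Xt_down Hf Hij Hw) Hz.
  have [H2 _] := Xt_mem_ke Hf (Xt_down Hf Hmj Hw) Hzm.
  by rewrite -H1 // H2.
exists y; split => //; apply: closed_lim HX _ => m.
have [z Hz] := Xt_ne (Imm m) Hf; exists z; split; first by case: (Xt_mem Hf Hz).
by move=> n Hn; apply: HY Hz _ _.
Qed.

Lemma Y_unique f y y' : Xt f -> Yprop f y -> Yprop f y' -> y = y'.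
Proof.
move=> Hf H H'; apply: funext => m; have [z Hz] := Xt_ne (Imm m.+1) Hf.
by rewrite -(H _ _ Hz m) // (H' _ _ Hz m).
Qed.

Lemma Y_shift f y : Xt f -> Yprop f y -> Yprop (shift_tilde X f) (shift y).
Proof.
move=> Hf H i z; have [z0 Hz0] := Xt_ne (Isucc i) Hf.
rewrite (st_val HX Hsurj Hf Hz0) => /cls_ke [Hp _] m Hm.
by rewrite -Hp // /shift; apply: H Hz0 _ _.
Qed.

Lemma Y_iter (t : Xt) y n : Yprop (val t) y -> Yprop (val (iter n (sigma_tilde X) t)) (iter n shift y).
Proof.
move=> H; elim: n => //= n IH; rewrite (sigma_val HX Hsurj).
by apply: Y_shift => //; exact: set_valP.
Qed.

End YS.

Section Pre.
Variable A : finType.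
Variable X : set (nat -> A).
Hypothesis HX : subshift X.
Hypothesis Hsurj : shift @` X = X.
Implicit Types (x y u v w z : nat -> A) (mu nu : seq A) (i j : Idx) (f g : Famspace A).
Local Notation ke := (kl_equiv X).
Local Notation Xt := (Xtilde X).

Definition pre (a : A) f : Famspace A :=
  fun i => match rep (f (Jx i)) with
           | Some w => cls X i (catw [:: a] w)
           | None => set0
           end.

Definition valid (a : A) f := forall w, f I01 w -> X (catw [:: a] w).

Lemma valid_ke01 a u w : ke I01 u w -> X (catw [:: a] u) -> X (catw [:: a] w).
Proof.
move=> [_ HP] Hu.
have : Pl X 1 (iter 0 shift u) [:: a] by split; [exact: catw_lang Hu|split].
by rewrite HP => -[_ [_ ?]].
Qed.

Lemma valid_down a f i w : Xt f -> valid a f -> Ile I01 i -> f i w -> X (catw [:: a] w).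
Proof. by move=> Hf Hv Hi Hw; apply: Hv; exact: Xt_down Hf Hi Hw. Qed.

Lemma pre_val a f i w : Xt f -> valid a f -> f (Jx i) w -> pre a f i = cls X i (catw [:: a] w).
Proof.
move=> Hf Hv Hw; rewrite /pre; have [w' [-> Hw']] := rep_some Hw.
by apply: cls_eq; apply: (ke_cons HX Hsurj); exact: Xt_mem_ke Hf Hw' Hw.
Qed.

Lemma pre_Xt a f : Xt f -> valid a f -> Xt (pre a f).
Proof.
move=> Hf Hv; split.
  move=> i; have [w Hw] := Xt_ne (Jx i) Hf; rewrite (pre_val Hf Hv Hw).
  by exists (catw [:: a] w); split => //; exact: valid_down Hf Hv (Ile_01_Jx i) Hw.
move=> i j Hij x Hx.
have [w Hw] := Xt_ne (Jx j) Hf; rewrite (pre_val Hf Hv Hw) => E.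
have Hw' : f (Jx i) w := Xt_down Hf (Ile_Jx_mono Hij) Hw.
rewrite (pre_val Hf Hv Hw').
by apply: cls_eq; apply: (ke_down HX Hsurj Hij); exact: cls_eq_ke Hx E.
Qed.

Lemma pre_shift a f : Xt f -> valid a f -> shift_tilde X (pre a f) = f.
Proof.
move=> Hf Hv; apply: funext => i.
have [w Hw] := Xt_ne (Jx (Isucc i)) Hf.
have Haw : X (catw [:: a] w) := valid_down Hf Hv (Ile_01_Jx _) Hw.
have Hz : pre a f (Isucc i) (catw [:: a] w).
  by rewrite (pre_val Hf Hv Hw); exact: cls_mem.
rewrite (st_val HX Hsurj (pre_Xt Hf Hv) Hz) shift_catw1.
have Hi : Ile i (Jx (Isucc i)) := Ile_trans (Ile_succ i) (Ile_Jx _).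
by have [_ ->] := Xt_mem Hf (Xt_down Hf Hi Hw).
Qed.

Lemma pre_Y0 a f y : Xt f -> valid a f -> Yprop (pre a f) y -> y 0%N = a.
Proof.
move=> Hf Hv HY; have [w Hw] := Xt_ne (Jx I11) Hf.
have Haw : X (catw [:: a] w) := valid_down Hf Hv (Ile_01_Jx _) Hw.
have Hz : pre a f I11 (catw [:: a] w) by rewrite (pre_val Hf Hv Hw); exact: cls_mem.
by rewrite -(HY _ _ Hz 0%N).
Qed.

Lemma pre_unique f f' y y' :
  Xt f -> Xt f' -> shift_tilde X f = shift_tilde X f' ->
  Yprop f y -> Yprop f' y' -> y 0%N = y' 0%N -> f = f'.
Proof.
move=> Hf Hf' E HY HY' E0; apply: funext => i.
have [z Hz] := Xt_ne (Isucc (Jx i)) Hf.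
have [z' Hz'] := Xt_ne (Isucc (Jx i)) Hf'.
have E1 := st_val HX Hsurj Hf Hz; have E2 := st_val HX Hsurj Hf' Hz'.
have Hk : ke (Jx i) (shift z) (shift z').
  apply: cls_eq_ke; last by rewrite -E1 -E2 E.
  by apply: (X_shift HX); case: (Xt_mem Hf' Hz').
have Hz0 : z 0%N = y 0%N by apply: HY Hz _ _.
have Hz'0 : z' 0%N = y' 0%N by apply: HY' Hz' _ _.
have Hkz : ke i z z'.
  rewrite -(catw_eq1 Hz0) -(catw_eq1 Hz'0) -E0.
  exact: ke_cons HX Hsurj _ _ _ _ Hk.
have Hi : Ile i (Isucc (Jx i)) := Ile_trans (Ile_Jx i) (Ile_succ _).
have [_ ->] := Xt_mem Hf (Xt_down Hf Hi Hz).
have [_ ->] := Xt_mem Hf' (Xt_down Hf' Hi Hz').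
exact: cls_eq Hkz.
Qed.

Lemma pre_letter f y w : Xt f -> Yprop f y -> shift_tilde X f I01 w ->
  X (catw [:: y 0%N] w).
Proof.
move=> Hf HY Hw; have [z Hz] := Xt_ne (Isucc I01) Hf.
move: Hw; rewrite (st_val HX Hsurj Hf Hz) => /cls_ke Hk.
apply: valid_ke01 Hk _; rewrite (catw_eq1 (HY _ _ Hz 0%N isT)).
by case: (Xt_mem Hf Hz).
Qed.

End Pre.

Section TopXt.
Variable A : finType.
Variable X : set (nat -> A).
Hypothesis HX : subshift X.
Hypothesis Hsurj : shift @` X = X.
Local Notation Xt := (Xtilde X).

Lemma Xt_valP (t : Xt) : Xt (val t).
Proof. exact: set_valP. Qed.

Lemma nbhs_Xt (t : Xt) (B : set Xt) :
  nbhs t B -> exists j, [set s : Xt | val s j = val t j] `<=` B.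
Proof.
move=> /(@sub_nbhs Idx (set (nat -> A)) (Xtilde X)) [L HL].
have [j Hj] := Ile_ub_seq L; exists j => s Hs; apply: HL => i Hi.
exact: Xt_eq_down (Xt_valP s) (Xt_valP t) (Hj i Hi) Hs.
Qed.

Lemma cyl_open j c : open [set s : Xt | val s j = c].
Proof. exact: (@sub_cyl_open Idx (set (nat -> A)) (Xtilde X)). Qed.

Lemma nbhs_cyl (t : Xt) j : nbhs t [set s : Xt | val s j = val t j].
Proof. by apply: open_nbhs_nbhs; split => //; exact: cyl_open. Qed.

Lemma nbhs_Xt_iff (t : Xt) (B : set Xt) :
  nbhs t B <-> exists j, [set s : Xt | val s j = val t j] `<=` B.
Proof.
split; first exact: nbhs_Xt.
by case=> j Hj; apply: filterS Hj _; exact: nbhs_cyl.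
Qed.

Lemma open_Xt_iff (U : set Xt) :
  open U <-> forall t, U t -> exists j, [set s : Xt | val s j = val t j] `<=` U.
Proof.
rewrite openE; split => H t Ht; first exact/nbhs_Xt_iff/H.
exact/nbhs_Xt_iff/H.
Qed.

Lemma cyl_closed j c : closed [set s : Xt | val s j = c].
Proof.
have -> : [set s : Xt | val s j = c] = ~` [set s : Xt | val s j <> c].
  by apply/seteqP; split => s /=; [move=> -> ?|move=> /contrapT].
rewrite closedC; apply/open_Xt_iff => t Ht; exists j => s /= ->; exact: Ht.
Qed.

End TopXt.

Section Main.
Variable A : finType.
Variable X : set (nat -> A).
Hypothesis HX : subshift X.
Hypothesis Hsurj : shift @` X = X.
Local Notation Xt := (Xtilde X).
Local Notation ke := (kl_equiv X).

Lemma Xt_zd : zero_dimensional Xt.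
Proof.
move=> x y /eqP Hxy.
have [i Hi] : exists i, val x i <> val y i.
  apply: contrapT => H; apply: Hxy; apply: val_inj; apply: funext => i.
  by apply: contrapT => Hn; apply: H; exists i.
exists [set s : Xt | val s i = val x i]; split => //.
  by split; [exact: cyl_open|exact: cyl_closed].
by move=> /= E; apply: Hi; exact: (esym E).
Qed.

Lemma sigma_cont : continuous (sigma_tilde X).
Proof.
move=> t B /= /nbhs_Xt [i Hi]; apply/nbhs_Xt_iff; exists (Isucc i) => s /= Hs.
apply: Hi => /=; rewrite !(sigma_val HX Hsurj) /shift_tilde.
by have -> : (val s (Isucc i)) = val t (Isucc i) := Hs.
Qed.

End Main.



Section Main2.
Variable A : finType.
Variable X : set (nat -> A).
Hypothesis HX : subshift X.
Hypothesis Hsurj : shift @` X = X.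
Local Notation Xt := (Xtilde X).
Local Notation ke := (kl_equiv X).

Lemma sigma_aper : aperiodic_on X shift -> aperiodic_on (@setT Xt) (sigma_tilde X).
Proof.
move=> Hap t _ n Hn E.
have [y [HY Xy]] := Yex HX (Xt_valP t).
have := Y_iter HX Hsurj (n := n) HY; rewrite E => HY'.
have := Y_unique (Xt_valP t) HY HY'.
by move=> /esym; apply: Hap.
Qed.

Lemma valid_of_X (f : Famspace A) : Xt f -> exists a, valid X a f.
Proof.
move=> Hf; have [w0 Hw0] := Xt_ne I01 Hf.
have [Xw0 _] := Xt_mem Hf Hw0.
have [a Ha] := X_pre Hsurj Xw0; exists a => w Hw.
exact: valid_ke01 (Xt_mem_ke Hf Hw0 Hw) Ha.
Qed.

Definition pre_t (a : A) (f : Famspace A) (H : Xt f) (Hv : valid X a f) : Xt :=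
  exist _ (pre X a f) (mem_set (pre_Xt HX Hsurj H Hv)).

Lemma sigma_pre_t a f H Hv : val (sigma_tilde X (@pre_t a f H Hv)) = f.
Proof. by rewrite (sigma_val HX Hsurj) /= (pre_shift HX Hsurj H Hv). Qed.

Lemma sigma_surj (t : Xt) : exists s, sigma_tilde X s = t.
Proof.
have [a Hv] := valid_of_X (Xt_valP t).
by exists (pre_t (Xt_valP t) Hv); apply: val_inj; rewrite sigma_pre_t.
Qed.


Lemma Y0_eq (s t : Xt) y y' : Yprop (val s) y -> Yprop (val t) y' ->
  val s I11 = val t I11 -> y 0%N = y' 0%N.
Proof.
move=> H H' E; have [z Hz] := Xt_ne I11 (Xt_valP t).
rewrite -(H' _ _ Hz 0%N isT); apply: esym; apply: (H I11 z) => //.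
by rewrite E.
Qed.

Lemma sigma_inj_U (t : Xt) : set_inj [set s : Xt | val s I11 = val t I11] (sigma_tilde X).
Proof.
move=> s1 s2 /set_mem H1 /set_mem H2 E; apply: val_inj.
have [y1 [HY1 _]] := Yex HX (Xt_valP s1).
have [y2 [HY2 _]] := Yex HX (Xt_valP s2).
apply: (pre_unique HX Hsurj (Xt_valP s1) (Xt_valP s2) _ HY1 HY2).
  by rewrite -!(sigma_val HX Hsurj) E.
have [y [HY _]] := Yex HX (Xt_valP t).
by rewrite (Y0_eq HY1 HY H1) (Y0_eq HY2 HY H2).
Qed.

Lemma sigma_open (V : set Xt) : open V -> open (sigma_tilde X @` V).
Proof.
move=> oV; apply/open_Xt_iff => h [g Vg <-].
have [j Hj] : exists j, [set s : Xt | val s j = val g j] `<=` V.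
  by move/open_Xt_iff: oV; apply.
have [y [HY _]] := Yex HX (Xt_valP g).
set a := y 0%N.
have Hf := Xt_valP (sigma_tilde X g).
have Hv : valid X a (val (sigma_tilde X g)).
  move=> w; rewrite (sigma_val HX Hsurj) => Hw.
  by rewrite /a; exact: (pre_letter HX Hsurj (Xt_valP g) HY Hw).
have Hg : val g = pre X a (val (sigma_tilde X g)).
  have [y'' [HY'' _]] := Yex HX (pre_Xt HX Hsurj Hf Hv).
  apply: (pre_unique HX Hsurj (Xt_valP g) (pre_Xt HX Hsurj Hf Hv) _ HY HY'').
    by rewrite (pre_shift HX Hsurj Hf Hv) (sigma_val HX Hsurj).
  by rewrite (pre_Y0 HX Hsurj Hf Hv HY'').
exists (Jx j) => h' /= Eh.
have Hf' := Xt_valP h'.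
have Hv' : valid X a (val h').
  move=> w Hw; apply: Hv.
  by rewrite -(Xt_eq_down Hf' Hf (Ile_01_Jx j) Eh).
exists (pre_t Hf' Hv'); last by apply: val_inj; rewrite sigma_pre_t.
apply: Hj => /=.
have [w Hw] := Xt_ne (Jx j) Hf'.
rewrite (pre_val HX Hsurj Hf' Hv' Hw) Hg.
have Hw2 : val (sigma_tilde X g) (Jx j) w by move: Hw; have -> : val h' (Jx j) = val (sigma_tilde X g) (Jx j) := Eh.
by rewrite (pre_val HX Hsurj Hf Hv Hw2).
Qed.

Lemma sigma_lh : local_homeo (sigma_tilde X).
Proof.
move=> t; exists [set s : Xt | val s I11 = val t I11]; split => //.
- exact: cyl_open.
- by apply: sigma_open; exact: cyl_open.
- exact: sigma_inj_U.
- split; first by apply: continuous_subspaceT; exact: sigma_cont.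
  by move=> V oV _; exact: sigma_open.
Qed.


Lemma ultra_seq T (F : set_system T) (Fu : UltraFilter F) (K : eqType) (sq : seq K) (P : K -> set T) :
  F [set x | exists v, v \in sq /\ P v x] -> exists v, F (P v).
Proof.
elim: sq => [|v sq IH] H.
  have [x [v []]] := filter_ex H; by rewrite in_nil.
case: (in_ultra_setVsetC (P v) Fu) => Hv; first by exists v.
apply: IH; apply: filterS (filterI H Hv) => x [[v' [Hv' Hx]] Hn].
exists v'; split => //; move: Hv'; rewrite inE => /orP [/eqP E|//].
by exfalso; apply: Hn; rewrite -E.
Qed.

Definition keyi (i : Idx) (x : nat -> A) : ((Ik i).-tuple A * {set (Il i).-tuple A})%type :=
  ([tuple x (nat_of_ord j) | j < Ik i],
   finset (fun m : (Il i).-tuple A => `[< Pl X (Il i) (iter (Ik i) shift x) (tval m) >])).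

Lemma key_ke i x y : keyi i x = keyi i y -> ke i x y.
Proof.
move=> E; have E1 := congr1 fst E; have E2 := congr1 snd E; split.
  move=> n Hn; have := congr1 (fun t => tnth t (Ordinal Hn)) E1.
  by rewrite !tnth_mktuple.
have H : forall x y, keyi i x = keyi i y ->
   Pl X (Il i) (iter (Ik i) shift x) `<=` Pl X (Il i) (iter (Ik i) shift y).
  move=> x' y' E' mu Hmu; have {E'} E := congr1 snd E'; rewrite /keyi /= in E; have Hs : size mu == Il i by case: Hmu => _ [-> _].
  have : (Tuple Hs) \in finset (fun m : (Il i).-tuple A => `[< Pl X (Il i) (iter (Ik i) shift x') (tval m) >]).
    by rewrite inE; apply/asboolP.
  by rewrite E inE => /asboolP.
by apply/seteqP; split; apply: H; [exact: E|exact: esym E].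
Qed.

Lemma Xt_compact : compact [set: Xt].
Proof.
rewrite compact_ultra => F FU _.
have Hc : forall i, exists c, F [set s : Xt | val s i = c].
  move=> i.
  pose P v := [set s : Xt | exists z, val s i z /\ keyi i z = v].
  have [v Fv] : exists v, F (P v).
    apply: (@ultra_seq _ F FU _ (enum (@predT ((Ik i).-tuple A * {set (Il i).-tuple A})%type)) P).
    apply: filterS filterT => s _.
    have [z Hz] := Xt_ne i (Xt_valP s).
    by exists (keyi i z); split; [rewrite mem_enum|exists z].
  have [s0 [z0 [Hz0 Ek0]]] := filter_ex Fv.
  exists (val s0 i); apply: filterS Fv => s [z [Hz Ek]] /=.
  have [_ ->] := Xt_mem (Xt_valP s) Hz.
  have [_ ->] := Xt_mem (Xt_valP s0) Hz0.
  by apply: cls_eq; apply: key_ke; rewrite Ek Ek0.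
have [g Hg] := choice Hc.
have Hxt : Xt g.
  split.
    move=> i; have [s Hs] := filter_ex (Hg i).
    have [x [Hx E]] := (Xt_valP s).1 i.
    by exists x; split => //; rewrite -Hs.
  move=> i j Hij x Hx E.
  have [s [Hsi Hsj]] := filter_ex (filterI (Hg i) (Hg j)).
  rewrite -Hsi; apply: ((Xt_valP s).2 i j Hij x Hx).
  by rewrite Hsj.
exists (exist _ g (mem_set Hxt)); split => //.
move=> B /nbhs_Xt [j Hj]; apply: filterS Hj _; exact: Hg j.
Qed.


Definition enI (n : nat) : Idx := odflt I01 (unpickle n).

Lemma enI_surj i : exists m, enI m = i.
Proof. by exists (pickle i); rewrite /enI pickleK. Qed.

Definition agree (t s : Xt) n := forall m, (m < n)%N -> val t (enI m) = val s (enI m).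

Lemma differ_ex (t s : Xt) : t <> s -> exists m, ~~ `[< val t (enI m) = val s (enI m) >].
Proof.
move=> H; apply: contrapT => Hn; apply: H; apply: val_inj; apply: funext => i.
have [m <-] := enI_surj i; apply: contrapT => Hd; apply: Hn; exists m.
by apply/negP => /asboolP.
Qed.

Definition nd (t s : Xt) : nat :=
  match pselect (t <> s) with
  | left h => ex_minn (differ_ex h)
  | right _ => 0%N
  end.

Lemma nd_spec (t s : Xt) : t <> s -> forall n, agree t s n <-> (n <= nd t s)%N.
Proof.
move=> H n; rewrite /nd; case: pselect => // h; case: ex_minnP => k Hk Hmin.
split.
  move=> Ha; rewrite leqNgt; apply/negP => Hlt.
  by move: Hk; rewrite Ha //; move/negP; apply; apply/asboolP.
move=> Hn m Hm; apply: contrapT => Hd.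
have : (k <= m)%N by apply: Hmin; apply/negP => /asboolP.
lia.
Qed.

Definition dist (t s : Xt) : R :=
  match pselect (t = s) with
  | left _ => R0
  | right _ => Rinv (INR (nd t s).+1)
  end.


Lemma invS_pos n : Rlt R0 (Rinv (INR n.+1)).
Proof. by apply: Rinv_0_lt_compat; apply: lt_0_INR; apply/ltP. Qed.

Lemma invS_le n m : (n <= m)%N -> Rle (Rinv (INR m.+1)) (Rinv (INR n.+1)).
Proof.
move=> H; apply: Rinv_le_contravar; first by apply: lt_0_INR; apply/ltP.
by apply: le_INR; apply/leP.
Qed.

Lemma dist_ge0 t s : Rle R0 (dist t s).
Proof. rewrite /dist; case: pselect => _; [exact: Rle_refl|exact: Rlt_le (invS_pos _)]. Qed.

Lemma dist_eq0 t s : dist t s = R0 <-> t = s.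
Proof.
rewrite /dist; case: pselect => H; split => //.
by move=> E; have := invS_pos (nd t s); rewrite E; move/Rlt_irrefl.
Qed.

Lemma agree_sym t s n : agree t s n -> agree s t n.
Proof. by move=> H m Hm; rewrite H. Qed.

Lemma dist_sym t s : dist t s = dist s t.
Proof.
rewrite /dist; case: pselect => H1; case: pselect => H2 //.
- by exfalso; apply: H2; rewrite H1.
- by exfalso; apply: H1; rewrite H2.
have H2' : s <> t by [].
have -> : nd t s = nd s t.
  apply/eqP; rewrite eqn_leq; apply/andP; split.
    by apply/(nd_spec H2'); apply: agree_sym; apply/(nd_spec H1).
  by apply/(nd_spec H1); apply: agree_sym; apply/(nd_spec H2').
by [].
Qed.

Lemma dist_le t s n : agree t s n -> Rle (dist t s) (Rinv (INR n.+1)).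
Proof.
rewrite /dist; case: pselect => H Ha; first exact: Rlt_le (invS_pos _).
by apply: invS_le; apply/(nd_spec H).
Qed.

Lemma dist_lt t s n : Rlt (dist t s) (Rinv (INR n.+1)) -> agree t s n.+1.
Proof.
rewrite /dist; case: pselect => H Hlt; first by rewrite H => m.
apply/(nd_spec H); rewrite ltnNge; apply/negP => Hle.
by apply: (Rlt_not_le _ _ Hlt); apply: invS_le.
Qed.

Lemma dist_tri t s u : Rle (dist t u) (Rplus (dist t s) (dist s u)).
Proof.
case: (pselect (t = u)) => [<-|Htu].
  by have := (dist_eq0 t t).2 erefl; have := dist_ge0 t s; have := dist_ge0 s t; lra.
case: (pselect (t = s)) => [<-|Hts'].
  by have := (dist_eq0 t t).2 erefl; have := dist_ge0 t u; lra.
case: (pselect (s = u)) => [<-|Hsu'].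
  by have := (dist_eq0 s s).2 erefl; have := dist_ge0 t s; lra.
have Hts := dist_ge0 t s; have Hsu := dist_ge0 s u.
have Ha : forall k, (k <= nd t s)%N -> (k <= nd s u)%N -> agree t u k.
  move=> k H1 H2 m Hm; rewrite (proj2 (nd_spec Hts' k) H1 m Hm).
  by rewrite (proj2 (nd_spec Hsu' k) H2 m Hm).
have E1 : dist t s = Rinv (INR (nd t s).+1) by rewrite /dist; case: pselect.
have E2 : dist s u = Rinv (INR (nd s u).+1) by rewrite /dist; case: pselect.
case: (leqP (nd t s) (nd s u)) => Hk.
  by have := dist_le (Ha _ (leqnn _) Hk); rewrite -E1; lra.
by have := dist_le (Ha _ (ltnW Hk) (leqnn _)); rewrite -E2; lra.
Qed.

Lemma Xt_metrizable : metrizable Xt.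
Proof.
exists dist; split.
- exact: dist_ge0.
- exact: dist_eq0.
- exact: dist_sym.
- exact: dist_tri.
move=> U; split.
  move/open_Xt_iff => H x Ux; have [j Hj] := H x Ux.
  have [m0 Hm0] := enI_surj j.
  exists (Rinv (INR m0.+1)); split; first exact: invS_pos.
  move=> y /dist_lt Ha; apply: Hj => /=.
  by rewrite -Hm0; apply: esym; apply: Ha.
move=> H; apply/open_Xt_iff => x Ux.
have [eps [Heps Hb]] := H x Ux.
have [N [HN HN0]] := archimed_cor1 eps Heps.
have [j Hj] := Ile_ub_seq [seq enI m | m <- iota 0 N].
exists j => y /= Hy; apply: Hb => /=.
have Ha : agree x y N.
  move=> m Hm; apply: esym.
  apply: (Xt_eq_down (Xt_valP y) (Xt_valP x) _ Hy).
  by apply: Hj; apply: map_f; rewrite mem_iota; apply/andP; split.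
have := dist_le Ha.
have : Rle (Rinv (INR N.+1)) (Rinv (INR N)).
  apply: Rinv_le_contravar; first by apply: lt_0_INR.
  by apply: le_INR; apply/leP.
lra.
Qed.

End Main2.

Section SplS.
Variable A : finType.
Variable X : set (nat -> A).
Hypothesis HX : subshift X.
Hypothesis Hsurj : shift @` X = X.
Local Notation Xt := (Xtilde X).
Local Notation ke := (kl_equiv X).

Definition dif (u v : nat -> A) : nat :=
  match pselect (exists n, u n <> v n) with
  | left h => proj1_sig (cid h)
  | right _ => 0%N
  end.

Lemma fin_sep (S : set (nat -> A)) : finite_set S ->
  exists K, forall u v, S u -> S v -> (forall n, (n < K)%N -> u n = v n) -> u = v.
Proof.
move=> HS.
have HD : finite_set ((fun p : (nat -> A) * (nat -> A) => dif p.1 p.2) @` (S `*` S)).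
  by apply: finite_image; apply: finite_setX.
have [F HF] := finite_fsetP.1 HD.
exists (\max_(d <- (finmap.enum_fset F)) d.+1)%N => u v Su Sv Hagr.
apply: funext => n; apply: contrapT => Hn.
have Hex : exists n, u n <> v n by exists n.
have Hd : u (dif u v) <> v (dif u v).
  by rewrite /dif; case: pselect => // h; exact: (proj2_sig (cid h)).
apply: Hd; apply: Hagr.
have H1 : [set dif p.1 p.2 | p in S `*` S] (dif u v) by exists (u, v).
rewrite HF in H1.
have HdF : dif u v \in finmap.enum_fset F by exact: H1.
by have := @leq_bigmax_seq nat (finmap.enum_fset F) xpredT (fun i => i.+1) _ HdF isT.
Qed.

Lemma SplX_letters y : Spl X shift y <->
  X y /\ exists a b, a <> b /\ X (catw [:: a] y) /\ X (catw [:: b] y).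
Proof.
split.
  move=> [Xy [y1 [y2 [X1 X2 H12 E1 E2]]]]; split => //.
  exists (y1 0%N), (y2 0%N); split.
    move=> E; apply: H12; have := catw_shift y1; have := catw_shift y2.
    by rewrite E1 E2 E => -> ->.
  by split; [rewrite -E1 catw_shift|rewrite -E2 catw_shift].
move=> [Xy [a [b [Hab [Ha Hb]]]]]; split => //.
exists (catw [:: a] y), (catw [:: b] y); split => //; try exact: shift_catw1.
by move=> E; apply: Hab; have := congr1 (fun x => x 0%N) E.
Qed.

Lemma Spl_ke01 y w : Spl X shift y -> X w -> ke I01 y w -> Spl X shift w.
Proof.
move=> /SplX_letters [Xy [a [b [Hab [Ha Hb]]]]] Xw Hk; apply/SplX_letters.
split => //; exists a, b; split => //; split; exact: valid_ke01 Hk _.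
Qed.

End SplS.

Section SplT.
Variable A : finType.
Variable X : set (nat -> A).
Hypothesis HX : subshift X.
Hypothesis Hsurj : shift @` X = X.
Variable K : nat.
Hypothesis HK : forall u v, Spl X shift u -> Spl X shift v ->
  (forall n, (n < K)%N -> u n = v n) -> u = v.
Local Notation Xt := (Xtilde X).
Local Notation ke := (kl_equiv X).

Lemma Ile_01_KK : Ile I01 (IKK K).
Proof. by idxs; split; lia. Qed.

Lemma rigid f y : Xt f -> Spl X shift y -> f (IKK K) = cls X (IKK K) y ->
  f = fun i => cls X i y.
Proof.
move=> Hf Hy E; apply: funext => i.
have [j [Hij HJj]] := Ile_ub i (IKK K).
have [w Hw] := Xt_ne j Hf.
have Hw' : f (IKK K) w := Xt_down Hf HJj Hw.
have [Xw _] := Xt_mem Hf Hw.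
have Hk : ke (IKK K) y w by move: Hw'; rewrite E => /cls_ke.
have Sw : Spl X shift w := Spl_ke01 Hy Xw (ke_down HX Hsurj Ile_01_KK Hk).
have Eyw : y = w by apply: HK => // n Hn; apply: (proj1 Hk).
have [_ ->] := Xt_mem Hf (Xt_down Hf Hij Hw).
by rewrite Eyw.
Qed.

Lemma SplT_char (t : Xt) y : Spl (@setT Xt) (sigma_tilde X) t -> Yprop (val t) y ->
  Spl X shift y /\ val t = (fun i => cls X i y).
Proof.
move=> [_ [s1 [s2 [_ _ H12 E1 E2]]]] HY.
have [y1 [HY1 X1]] := Yex HX (Xt_valP s1).
have [y2 [HY2 X2]] := Yex HX (Xt_valP s2).
have V1 : shift_tilde X (val s1) = val t by rewrite -(sigma_val HX Hsurj) E1.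
have V2 : shift_tilde X (val s2) = val t by rewrite -(sigma_val HX Hsurj) E2.
have Ey1 : shift y1 = y.
  apply: (Y_unique (Xt_valP t) _ HY); rewrite -V1; apply: (Y_shift HX Hsurj) => //; exact: Xt_valP.
have Ey2 : shift y2 = y.
  apply: (Y_unique (Xt_valP t) _ HY); rewrite -V2; apply: (Y_shift HX Hsurj) => //; exact: Xt_valP.
have Hab : y1 0%N <> y2 0%N.
  move=> E; apply: H12; apply: val_inj.
  by apply: (pre_unique HX Hsurj (Xt_valP s1) (Xt_valP s2) _ HY1 HY2 E); rewrite V1 V2.
have Sy : Spl X shift y.
  apply/SplX_letters; split; first by rewrite -Ey1; exact: X_shift HX _ X1.
  exists (y1 0%N), (y2 0%N); split => //.
  by split; [rewrite -Ey1 catw_shift|rewrite -Ey2 catw_shift].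
split => //.
refine (rigid (Xt_valP t) Sy _).
have [w Hw] := Xt_ne (IKK K) (Xt_valP t).
have Hw01 : val t I01 w := Xt_down (Xt_valP t) Ile_01_KK Hw.
have [Xw ->] := Xt_mem (Xt_valP t) Hw.
have Sw : Spl X shift w.
  apply/SplX_letters; split => //; exists (y1 0%N), (y2 0%N); split => //.
  split.
    by apply: (pre_letter HX Hsurj (Xt_valP s1) HY1); rewrite V1.
  by apply: (pre_letter HX Hsurj (Xt_valP s2) HY2); rewrite V2.
have Ewy : w = y.
  by apply: HK; [exact: Sw|exact: Sy|move=> n Hn; apply: HY Hw _ _].
by rewrite Ewy.
Qed.


Definition Phi (t : Xt) : nat -> A := proj1_sig (cid (Yex HX (Xt_valP t))).
Lemma Phi_spec t : Yprop (val t) (Phi t) /\ X (Phi t).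
Proof. exact: (proj2_sig (cid (Yex HX (Xt_valP t)))). Qed.

Definition iota_t y (Hy : X y) : Xt :=
  exist _ (fun i => cls X i y) (mem_set (iota_Xt HX Hsurj Hy)).

Lemma Yprop_iota y : Yprop (fun i => cls X i y) y.
Proof. by move=> i z /cls_ke [Hp _] m Hm; rewrite Hp. Qed.

Lemma st_iota a y : X (catw [:: a] y) ->
  shift_tilde X (fun i => cls X i (catw [:: a] y)) = fun i => cls X i y.
Proof.
move=> Ha; apply: funext => i.
by rewrite (st_val HX Hsurj (iota_Xt HX Hsurj Ha) (cls_mem (Isucc i) Ha)) shift_catw1.
Qed.

Lemma Spl_eq : Spl X shift = Phi @` (Spl (@setT Xt) (sigma_tilde X)).
Proof.
apply/seteqP; split; last first.
  by move=> y [t Ht <-]; exact: (SplT_char Ht (Phi_spec t).1).1.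
move=> y Sy; have Xy : X y by case: Sy.
have [_ [a [b [Hab [Ha Hb]]]]] := (@SplX_letters _ X y).1 Sy.
exists (iota_t Xy).
  split => //; exists (iota_t Ha), (iota_t Hb); split => //.
  - move=> E; apply: Hab; have := congr1 (fun t : Xt => val t I11) E => /= E'.
    have := cls_eq_ke Hb E' => -[Hp _]; have := Hp 0%N isT.
    by rewrite /catw.
  - by apply: val_inj; rewrite (sigma_val HX Hsurj) /= st_iota.
  - by apply: val_inj; rewrite (sigma_val HX Hsurj) /= st_iota.
exact: (esym (Y_unique (iota_Xt HX Hsurj Xy) (@Yprop_iota y) (Phi_spec (iota_t Xy)).1)).
Qed.

Lemma Phi_inj : {in Spl (@setT Xt) (sigma_tilde X) &, injective Phi}.
Proof.
move=> t t' /set_mem Ht /set_mem Ht' E; apply: val_inj.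
rewrite (SplT_char Ht (Phi_spec t).1).2 (SplT_char Ht' (Phi_spec t').1).2.
by rewrite E.
Qed.

Lemma SplT_card : (Spl (@setT Xt) (sigma_tilde X) #= Spl X shift)%card.
Proof. by rewrite Spl_eq; apply: card_esym; exact: inj_card_eq Phi_inj. Qed.

Lemma SplT_isolated (t : Xt) : Spl (@setT Xt) (sigma_tilde X) t -> isolated_point t.
Proof.
move=> Ht; have [Sy Et] := SplT_char Ht (Phi_spec t).1.
rewrite /isolated_point.
have -> : [set t] = [set s : Xt | val s (IKK K) = val t (IKK K)].
  apply/seteqP; split => s /=; first by move=> ->.
  move=> E; apply: val_inj.
  rewrite Et; apply: (rigid (Xt_valP s) Sy).
  have E' : val s (IKK K) = val t (IKK K) := E; by rewrite E' Et.
exact: cyl_open.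
Qed.

End SplT.

Theorem theorem3p5 (A : finType) (X : set (nat -> A)) :
  subshift X ->
  shift @` X = X ->
  aperiodic_on X shift ->
  finite_set (Spl X shift) ->
  [/\ zero_dimensional (Xtilde X),
      compact (@setT (Xtilde X)),
      metrizable (Xtilde X),
      (forall f, Xtilde X f -> Xtilde X (shift_tilde X f)) &
      [/\ aperiodic_on (@setT (Xtilde X)) (sigma_tilde X),
          (forall t : Xtilde X, exists s, sigma_tilde X s = t),
          local_homeo (sigma_tilde X),
          finite_set (Spl (@setT (Xtilde X)) (sigma_tilde X)) /\
            (Spl (@setT (Xtilde X)) (sigma_tilde X) #= Spl X shift)%card &
          (forall t : Xtilde X, Spl (@setT (Xtilde X)) (sigma_tilde X) t ->
             isolated_point t)]].
Proof.
move=> HX Hsurj Hap Hfin.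
have [K HK] := fin_sep Hfin.
split.
- exact: Xt_zd.
- exact: Xt_compact.
- exact: Xt_metrizable.
- by move=> f Hf; exact: st_Xt HX Hsurj f Hf.
split.
- exact: sigma_aper HX Hsurj Hap.
- exact: sigma_surj HX Hsurj.
- exact: sigma_lh HX Hsurj.
- have Hc := SplT_card HX Hsurj HK.
  by split => //; rewrite (eq_finite_set Hc).
- by move=> t Ht; exact: (SplT_isolated HX Hsurj HK Ht).
Qed.
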